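(* Let $M$ be a matroid on $E$ and $\mathfrak{A}\subseteq\mathfrak{S}\subseteq\mathcal{P}(E)$. If $a_{\mathfrak{S}}(A)=0$ for every $A\in\mathfrak{A}$, then $\mathrm{ec}_{\mathfrak{S}-\mathfrak{A}}(M)=\mathrm{ec}_{\mathfrak{S}}(M)$. Likewise, if $b_{\mathfrak{S}}(A)=0$ for every $A\in\mathfrak{A}$, then $\mathrm{ec}_{\mathfrak{S}-\mathfrak{A}}(M)=\mathrm{ec}_{\mathfrak{S}}(M)$.
   Context: $M$ has rank $k$. For $\mathfrak{T}\subseteq\mathcal{P}(E)$, viewed as a poset under inclusion with Möbius function $\mu_{\mathfrak{T}}$: $c(T)=\#T-\mathrm{rk}\,T$; $a_{\mathfrak{T}}(S)=c(S)-\sum_{T\in\mathfrak{T},T\subsetneq S}a_{\mathfrak{T}}(T)$ recursively; $b_{\mathfrak{T}}(T)=\sum_{S\in\mathfrak{T}}(k-\mathrm{rk}\,S)\mu_{\mathfrak{T}}(T,S)$; $\mathrm{ec}_{\mathfrak{T}}(M)=\sum_{S\in\mathfrak{T}}(k-\mathrm{rk}\,S)a_{\mathfrak{T}}(S)$. *)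

(* Defs.v *)
From mathcomp Require Import all_boot all_order all_algebra.
Set Implicit Arguments. Unset Strict Implicit. Unset Printing Implicit Defensive.
Import GRing.Theory Num.Theory.
Local Open Scope ring_scope.

Record matroid (E : finType) := Matroid {
  rk : {set E} -> nat;
  rk_card : forall A : {set E}, (rk A <= #|A|)%N;
  rk_mono : forall A B : {set E}, A \subset B -> (rk A <= rk B)%N;
  rk_submod : forall A B : {set E},
      (rk (A :|: B) + rk (A :&: B) <= rk A + rk B)%N
}.

Section Defs.
Variables (E : finType) (M : matroid E).

Definition mrank : nat := rk M [set: E].

Definition cdef (T : {set E}) : int := (#|T|)%:Z - (rk M T)%:Z.

Variable F : {set {set E}}.

(* a_F(S) = c(S) - sum_{T in F, T proper subset of S} a_F(T), by recursion
   with fuel (proper subsets have strictly smaller cardinality). *)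
Fixpoint a_aux (n : nat) (S : {set E}) : int :=
  if n is n'.+1 then
    cdef S - \sum_(T in F | T \proper S) a_aux n' T
  else 0.

Definition a_fam (S : {set E}) : int := a_aux (#|S|).+1 S.

Fixpoint mu_aux (n : nat) (x y : {set E}) : int :=
  if n is n'.+1 then
    if x == y then 1
    else if x \proper y then
      - \sum_(z in F | (x \subset z) && (z \proper y)) mu_aux n' x z
    else 0
  else 0.

Definition mobius (x y : {set E}) : int := mu_aux (#|y|).+1 x y.

Definition b_fam (T : {set E}) : int :=
  \sum_(S in F) ((mrank)%:Z - (rk M S)%:Z) * mobius T S.

Definition ec : int :=
  \sum_(S in F) ((mrank)%:Z - (rk M S)%:Z) * a_fam S.

End Defs.

(* Main.v *)
Require Import Defs.
From mathcomp Require Import all_boot all_order all_algebra.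
Set Implicit Arguments. Unset Strict Implicit. Unset Printing Implicit Defensive.
Import GRing.Theory Num.Theory.
Local Open Scope ring_scope.

Section Work.
Variables (E : finType) (M : matroid E).
Implicit Types (x y z S T U : {set E}) (F G : {set {set E}}).

Lemma mu_aux_fuel (F : {set {set E}}) x : forall n m (y : {set E}), (#|y| < n)%N -> (#|y| < m)%N ->
  mu_aux F n x y = mu_aux F m x y.
Proof.
elim=> [|n IH] [|m] y //= Hn Hm.
case: (x == y) => //; case: (x \proper y) => //.
congr (- _); apply: eq_bigr => z /andP [_ /andP [_ Hz]].
have := proper_card Hz => Hc.
apply: IH; apply: leq_trans Hc _; by rewrite -ltnS.
Qed.

Lemma mobiusE (F : {set {set E}}) x y : mobius F x y =
  if x == y then 1 else if x \proper y then
    - \sum_(z in F | (x \subset z) && (z \proper y)) mobius F x z else 0.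
Proof.
rewrite [in LHS]/mobius /=; case: (x == y) => //; case: (x \proper y) => //.
congr (- _); apply: eq_bigr => z /andP [_ /andP [_ Hz]].
apply: mu_aux_fuel => //; exact: proper_card Hz.
Qed.

Lemma mobius0 (F : {set {set E}}) x y : ~~ (x \subset y) -> mobius F x y = 0.
Proof.
move=> H; rewrite mobiusE; case: eqP => [exy|_]; first by rewrite exy subxx in H.
by case: ifP => // /properP [Hs _]; rewrite Hs in H.
Qed.

Lemma mobius_left (F : {set {set E}}) x y : x \in F -> y \in F ->
  \sum_(z in F | z \subset y) mobius F x z = (x == y)%:R.
Proof.
move=> xF yF.
case: (boolP (x \subset y)) => Hxy; last first.
  rewrite big1; last first.
    move=> z /andP [_ zy]; apply: mobius0; apply: contra Hxy => xz.
    exact: subset_trans xz zy.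
  by case: eqVneq Hxy => [->|]; rewrite ?subxx.
rewrite (bigD1 y) /=; last by rewrite yF subxx.
case: (eqVneq x y) => [exy|nxy].
  subst y; rewrite mobiusE eqxx big1 ?addr0 // => z /andP [/andP [_ zx] nzx].
  rewrite mobiusE; case: eqP => [exz|_]; first by rewrite exz eqxx in nzx.
  case: ifP => // /properP [xz _].
  have/eqP ezx : z == x by rewrite eqEsubset zx xz.
  by rewrite ezx eqxx in nzx.
have pxy : x \proper y by rewrite properEneq Hxy andbT.
rewrite (mobiusE _ x y) (negbTE nxy) pxy.
rewrite [X in _ + X](eq_bigl (fun z => (z \in F) && (z \subset y) && (z != y))) //.
rewrite addrC; apply/eqP; rewrite subr_eq0; apply/eqP.
rewrite big_mkcond [RHS]big_mkcond; apply: eq_bigr => z _.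
rewrite properEneq; case: (z \in F) => //=.
case: (boolP (x \subset z)) => xz /=; first by rewrite andbC.
by case: ifP => // _; rewrite mobius0.
Qed.

Definition muM F x z : int :=
  if x \in F then (if z \in F then mobius F x z else 0) else (x == z)%:R.
Definition zeM F z y : int :=
  if z \in F then (if y \in F then (z \subset y)%:R else 0) else (z == y)%:R.

Lemma prod1 F x y : \sum_z muM F x z * zeM F z y = (x == y)%:R.
Proof.
rewrite /muM; case: (boolP (x \in F)) => xF.
  case: (boolP (y \in F)) => yF.
    rewrite -(mobius_left xF yF) big_mkcond [RHS]big_mkcond.
    apply: eq_bigr => z _; rewrite /zeM yF; case: (z \in F); rewrite ?mul0r //=.
    by case: (z \subset y); rewrite ?mulr1 ?mulr0 ?mul0r.
  rewrite big1; last by move=> z _; rewrite /zeM (negbTE yF); case: ifP; rewrite ?mulr0 ?mul0r.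
  by case: eqVneq => // exy; rewrite -exy xF in yF.
rewrite (bigD1 x) //= eqxx mul1r big1 ?addr0; last first.
  by move=> z nzx; rewrite eq_sym (negbTE nzx) mul0r.
by rewrite /zeM (negbTE xF).
Qed.

Lemma prod2 F x y : \sum_z zeM F x z * muM F z y = (x == y)%:R.
Proof.
pose N := #|{: {set E}}|.
pose A : 'M[int]_N := \matrix_(i, j) muM F (enum_val i) (enum_val j).
pose B : 'M[int]_N := \matrix_(i, j) zeM F (enum_val i) (enum_val j).
have bij : {on predT, bijective (enum_rank : {set E} -> _)}.
  by apply: onW_bij; exists enum_val; [exact: enum_rankK | exact: enum_valK].
have AB : A *m B = 1%:M.
  apply/matrixP => i j; rewrite !mxE (reindex _ bij) /=.
  under eq_bigr do rewrite !mxE !enum_rankK.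
  by rewrite prod1 (inj_eq enum_val_inj).
have /matrixP/(_ (enum_rank x) (enum_rank y)) := mulmx1C AB.
rewrite !mxE (reindex _ bij) /=.
under eq_bigr do rewrite !mxE !enum_rankK.
by rewrite (inj_eq enum_rank_inj).
Qed.

Lemma mobius_right F x y : x \in F -> y \in F ->
  \sum_(z in F | x \subset z) mobius F z y = (x == y)%:R.
Proof.
move=> xF yF; rewrite -(prod2 F x y) big_mkcond /=; apply: eq_bigr => z _.
rewrite /zeM /muM xF yF; case: (z \in F); rewrite ?mul0r //=.
case: (x \subset z); rewrite ?mul1r ?mul0r //.
Qed.


Lemma a_aux_fuel F : forall n m S, (#|S| < n)%N -> (#|S| < m)%N ->
  a_aux M F n S = a_aux M F m S.
Proof.
elim=> [|n IH] [|m] S //= Hn Hm.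
congr (_ - _); apply: eq_bigr => T /andP [_ HT].
have := proper_card HT => Hc.
apply: IH; apply: leq_trans Hc _; by rewrite -ltnS.
Qed.

Lemma a_famE F S : a_fam M F S = cdef M S - \sum_(T in F | T \proper S) a_fam M F T.
Proof.
rewrite [in LHS]/a_fam /=; congr (_ - _); apply: eq_bigr => T /andP [_ HT].
apply: a_aux_fuel => //; exact: proper_card HT.
Qed.

Lemma cdef_sum F S : S \in F -> cdef M S = \sum_(T in F | T \subset S) a_fam M F T.
Proof.
move=> SF; rewrite (bigD1 S) /=; last by rewrite SF subxx.
rewrite a_famE -addrA [X in _ + X](_ : _ = 0) ?addr0 //.
apply/eqP; rewrite addrC subr_eq0; apply/eqP.
apply: eq_bigl => T; rewrite properEneq; case: (T \in F) => //=; exact: andbC.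
Qed.

Lemma a_restrict F G : G \subset F ->
  (forall X, X \in F -> X \notin G -> a_fam M F X = 0) ->
  forall S, a_fam M G S = a_fam M F S.
Proof.
move=> GF H0 S; move: {2}#|S|.+1 (ltnSn #|S|) => n; elim: n S => // n IH S HS.
rewrite a_famE [RHS]a_famE; congr (_ - _).
rewrite big_mkcond [RHS]big_mkcond; apply: eq_bigr => T _.
case: (boolP (T \in G)) => TG.
  rewrite (subsetP GF _ TG) /=; case: ifP => // HT.
  apply: IH; apply: leq_trans (proper_card HT) _; by rewrite -ltnS.
by case: (boolP (T \in F)) => //= TF; case: ifP => // _; rewrite H0.
Qed.

Definition w S : int := (mrank M)%:Z - (rk M S)%:Z.

Lemma w_b F T : T \in F -> w T = \sum_(U in F | T \subset U) b_fam M F U.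
Proof.
move=> TF; rewrite /b_fam exchange_big /=.
rewrite (bigD1 T TF) /= [X in _ + X]big1 ?addr0.
  by rewrite -mulr_sumr mobius_right // eqxx mulr1.
move=> S /andP [SF nST]; rewrite -mulr_sumr mobius_right //.
by rewrite eq_sym (negbTE nST) mulr0.
Qed.

Lemma ec_b F G : G \subset F ->
  (forall X, X \in F -> X \notin G -> b_fam M F X = 0) ->
  ec M G = \sum_(U in G) b_fam M F U * cdef M U.
Proof.
move=> GF H0; rewrite /ec.
have -> : \sum_(S in G) ((mrank M)%:Z - (rk M S)%:Z) * a_fam M G S =
   \sum_(T in G) \sum_(U in G) (if T \subset U then b_fam M F U * a_fam M G T else 0).
  apply: eq_bigr => T TG; rewrite -/(w T) (w_b (subsetP GF _ TG)) mulr_suml.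
  rewrite big_mkcond [RHS]big_mkcond; apply: eq_bigr => U _.
  case: (boolP (U \in G)) => UG; first by rewrite (subsetP GF _ UG).
  case: (boolP (U \in F)) => //= UF; case: ifP => // _.
  by rewrite H0 // mul0r.
rewrite exchange_big /=; apply: eq_bigr => U UG.
rewrite (cdef_sum UG) mulr_sumr [RHS]big_mkcond [LHS]big_mkcond; apply: eq_bigr => T _.
by case: (T \in G).
Qed.

End Work.

Theorem corollary6p4 (E : finType) (M : matroid E) (A S : {set {set E}}) :
  A \subset S ->
  ((forall X, X \in A -> a_fam M S X = 0) -> ec M (S :\: A) = ec M S) /\
  ((forall X, X \in A -> b_fam M S X = 0) -> ec M (S :\: A) = ec M S).
Proof.
move=> AS; have GS : S :\: A \subset S by apply: subsetDl.
have inA : forall X, X \in S -> X \notin S :\: A -> X \in A.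
  by move=> X XS; rewrite in_setD XS andbT negbK.
split=> H.
  have Hr := a_restrict GS (fun X XS XG => H X (inA X XS XG)).
  rewrite /ec; under eq_bigr do rewrite Hr.
  rewrite [RHS](big_setID A) /= (setIidPr AS) [X in X + _]big1 ?add0r //.
  by move=> X XA; rewrite H // mulr0.
rewrite (ec_b GS (fun X XS XG => H X (inA X XS XG))) (ec_b (subxx S)); last first.
  by move=> X ->.
rewrite [RHS](big_setID A) /= (setIidPr AS) [X in X + _]big1 ?add0r //.
by move=> X XA; rewrite H // mul0r.
Qed.
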